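(* Every $2$-tree $G$ has, for every vertex $v\in V(G)$, a $1$-perfect orientation in which $v$ is a sink (in particular every $2$-tree is $1$-perfectly orientable). Every hollowed $2$-tree is $1$-perfectly orientable, but each of its $1$-perfect orientations has no sink.
   Context: An orientation of $G$ is $1$-perfect if for every vertex the out-neighborhood is a clique in $G$; $G$ is $1$-perfectly orientable if it has one. A sink is a vertex of out-degree $0$. $2$-trees: $K_2$ is a $2$-tree, and adding to a $2$-tree a new vertex adjacent to exactly two adjacent vertices yields a $2$-tree; there are no others. Hollowed $2$-trees: every cycle of length at least $4$ is a hollowed $2$-tree, and adding to a hollowed $2$-tree a new vertex adjacent to exactly two adjacent vertices yields a hollowed $2$-tree; there are no others. *)

(* Defs.v *)
(* Simple graphs on a finite vertex type T, given by an
   edge relation E : rel T (assumed symmetric and irreflexive in the theorem). *)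
From mathcomp Require Import all_boot.
Set Implicit Arguments. Unset Strict Implicit. Unset Printing Implicit Defensive.

Section Graphs.
Variable T : finType.
Implicit Types (E D : rel T) (V : {set T}).

Inductive two_tree E : {set T} -> Prop :=
| two_tree_K2 x y : x != y -> E x y -> two_tree E [set x; y]
| two_tree_add V x y z :
    two_tree E V -> x \in V -> y \in V -> E x y -> z \notin V ->
    (forall w, w \in V -> E z w = (w == x) || (w == y)) ->
    two_tree E (z |: V).

Definition is_long_cycle E V : Prop :=
  exists s : seq T, [/\ uniq s, 4 <= size s, V = [set x in s] &
    forall x y, x \in V -> y \in V -> E x y = (y == next s x) || (x == next s y)].

Inductive hollowed_two_tree E : {set T} -> Prop :=
| hollowed_cycle V : is_long_cycle E V -> hollowed_two_tree E V
| hollowed_add V x y z :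
    hollowed_two_tree E V -> x \in V -> y \in V -> E x y -> z \notin V ->
    (forall w, w \in V -> E z w = (w == x) || (w == y)) ->
    hollowed_two_tree E (z |: V).

(* D (arcs: D x y means x -> y) is an orientation of the graph (T, E):
   every arc is an edge and every edge gets exactly one direction. *)
Definition is_orientation E D : Prop :=
  (forall x y, D x y -> E x y) /\ (forall x y, E x y -> D x y (+) D y x).

Definition one_perfect E D : Prop :=
  is_orientation E D /\
  forall x y z, D x y -> D x z -> y != z -> E y z.

Definition one_perfectly_orientable E : Prop := exists D, one_perfect E D.

Definition sink D (v : T) : Prop := forall y, ~~ D v y.

End Graphs.

(* Main.v *)
Require Import Defs.
From mathcomp Require Import all_boot.
From mathcomp Require Import zify.
Set Implicit Arguments. Unset Strict Implicit.
Section Cyc.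
Variable T : finType.

Lemma next_nth_i (s : seq T) x0 i : uniq s -> i < size s ->
  next s (nth x0 s i) = nth x0 s (i.+1 %% size s).
Proof.
move=> Us Hi; rewrite next_nth mem_nth // index_uniq //.
case: s Us Hi => [|y p] //= _ Hi.
have [lt|eq] : i < size p \/ i = size p by lia.
  by rewrite modn_small //= (set_nth_default x0 y).
by subst i; rewrite modnn /= nth_default.
Qed.

Lemma iter_next_nth (s : seq T) x0 k i : uniq s -> i < size s ->
  iter k (next s) (nth x0 s i) = nth x0 s ((i + k) %% size s).
Proof.
move=> Us Hi; elim: k => [|k IH]; first by rewrite addn0 modn_small.
have Hn : 0 < size s by lia.
rewrite iterS IH next_nth_i // ?ltn_pmod //.
by rewrite -addn1 modnDml addn1 addnS.
Qed.

Lemma mod_neq i k n : i < n -> 0 < k < n -> (i + k) %% n != i.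
Proof.
move=> Hi Hk.
have [lt|ge] := ltnP (i + k) n.
  by rewrite modn_small //; lia.
have -> : i + k = (i + k - n) + n by lia.
by rewrite modnDr modn_small; lia.
Qed.

Lemma iter_next_neq (s : seq T) u k : uniq s -> u \in s -> 0 < k < size s ->
  iter k (next s) u != u.
Proof.
move=> Us Hu Hk.
have Hi : index u s < size s by rewrite index_mem.
rewrite -(nth_index u Hu) iter_next_nth // nth_uniq // ?ltn_pmod //; last by lia.
exact: mod_neq.
Qed.

Lemma iter_next_n (s : seq T) u : uniq s -> u \in s ->
  iter (size s) (next s) u = u.
Proof.
move=> Us Hu.
have Hi : index u s < size s by rewrite index_mem.
rewrite -(nth_index u Hu) iter_next_nth // modnDr modn_small //.
Qed.

Lemma iter_next_in (s : seq T) u k : u \in s -> iter k (next s) u \in s.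
Proof. by move=> Hu; elim: k => //= k IH; rewrite mem_next. Qed.
End Cyc.
Section G.
Variable T : finType.
Variable E : rel T.
Hypothesis Esym : symmetric E.
Hypothesis Eirr : irreflexive E.

Definition okV (V : {set T}) (D : rel T) :=
 [/\ forall u w, u \in V -> w \in V -> D u w -> E u w,
     forall u w, u \in V -> w \in V -> E u w -> D u w (+) D w u &
     forall u w1 w2, u \in V -> w1 \in V -> w2 \in V -> D u w1 -> D u w2 ->
       w1 != w2 -> E w1 w2].

Lemma cycle_nosink (s : seq T) D v : uniq s -> 4 <= size s ->
  (forall x y, x \in s -> y \in s -> E x y = (y == next s x) || (x == next s y)) ->
  okV [set x in s] D -> v \in s -> (forall w, w \in s -> ~~ D v w) -> False.
Proof.
move=> Us Hs HE [HD Hx Hc] Hv Hsink.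
have Ins : forall u, u \in s -> u \in [set x in s] by move=> u; rewrite inE.
have F2 : forall u, u \in s -> next s u != u.
  by move=> u Hu; have /= := @iter_next_neq _ s u 1 Us Hu; apply; lia.
have F3 : forall u, u \in s -> next s (next s u) != u.
  by move=> u Hu; have /= := @iter_next_neq _ s u 2 Us Hu; apply; lia.
have F4 : forall u, u \in s -> next s (next s (next s u)) != u.
  by move=> u Hu; have /= := @iter_next_neq _ s u 3 Us Hu; apply; lia.
have key : forall u, u \in s -> ~~ D u (next s u) ->
    ~~ D (next s u) (next s (next s u)).
  move=> u Hu Hn.
  have Hnu : next s u \in s by rewrite mem_next.
  have Hnnu : next s (next s u) \in s by rewrite mem_next.
  have Eu : E u (next s u) by rewrite HE // eqxx.
  have := Hx _ _ (Ins _ Hu) (Ins _ Hnu) Eu; rewrite (negbTE Hn) /= => Db.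
  apply/negP => Dnn.
  have := Hc _ _ _ (Ins _ Hnu) (Ins _ Hu) (Ins _ Hnnu) Db Dnn.
  rewrite eq_sym F3 // => /(_ isT).
  rewrite HE // (negbTE (F2 _ Hnu)) /= eq_sym (negbTE (F4 _ Hu)) //.
have it : forall k, ~~ D (iter k (next s) v) (next s (iter k (next s) v)).
  elim=> [|k IH] /=; first by apply: Hsink; rewrite mem_next.
  by apply: key => //; apply: iter_next_in.
set w := iter (size s).-1 (next s) v.
have Hw : w \in s by apply: iter_next_in.
have Nw : next s w = v.
  rewrite /w -iterS prednK; last by lia.
  exact: iter_next_n.
have Ew : E w v by rewrite HE // Nw eqxx.
have := Hx _ _ (Ins _ Hw) (Ins _ Hv) Ew.
rewrite (negbTE (Hsink _ Hw)) addbF => Dwv.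
by have := it (size s).-1; rewrite -/w Nw Dwv.
Qed.

Definition okD (V : {set T}) (D : rel T) :=
 [/\ forall u w, D u w -> [&& u \in V, w \in V & E u w],
     forall u w, u \in V -> w \in V -> E u w -> D u w (+) D w u &
     forall u w1 w2, D u w1 -> D u w2 -> w1 != w2 -> E w1 w2].

Lemma cycle_exists (s : seq T) : uniq s -> 4 <= size s ->
  (forall x y, x \in s -> y \in s -> E x y = (y == next s x) || (x == next s y)) ->
  exists D, okD [set x in s] D.
Proof.
move=> Us Hs HE.
have F3 : forall u, u \in s -> next s (next s u) != u.
  by move=> u Hu; have /= := @iter_next_neq _ s u 2 Us Hu; apply; lia.
exists (fun u w => (u \in s) && (w == next s u)); split.
- move=> u w /andP[Hu /eqP->]; rewrite !inE Hu mem_next Hu HE ?mem_next // eqxx //.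
- move=> u w; rewrite !inE => Hu Hw; rewrite HE // Hu Hw /=.
  case/orP=> /eqP Eq.
    rewrite Eq eqxx /=; apply/negP => /eqP Hn.
    by move: (F3 _ Hu); rewrite -Hn eqxx.
  rewrite Eq eqxx addbT; apply/negP => /eqP Hn.
  by move: (F3 _ Hw); rewrite -Hn eqxx.
- by move=> u w1 w2 /andP[_ /eqP->] /andP[_ /eqP->]; rewrite eqxx.
Qed.

Lemma okD_okV V D : okD V D -> okV V D.
Proof.
case=> H1 H2 H3; split => //.
  by move=> u w _ _ /H1 /and3P[].
by move=> u w1 w2 _ _ _; apply: H3.
Qed.

Lemma ext V D x y z (Oz Iz : pred T) :
  okD V D -> x \in V -> y \in V -> E x y -> z \notin V ->
  (forall w, w \in V -> E z w = (w == x) || (w == y)) ->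
  (forall w, Oz w || Iz w -> (w == x) || (w == y)) ->
  Oz x (+) Iz x -> Oz y (+) Iz y ->
  (forall u w, Iz u -> D u w -> (w == x) || (w == y)) ->
  okD (z |: V) (fun u w => [|| D u w, (u == z) && Oz w | (w == z) && Iz u]).
Proof.
move=> [H1 H2 H3] Hx Hy Exy Hz HN HOI Xx Xy HI.
have Dz : forall w, D z w = false.
  by move=> w; apply/negP => /H1 /and3P[]; rewrite (negbTE Hz).
have Dz' : forall w, D w z = false.
  by move=> w; apply/negP => /H1 /and3P[_]; rewrite (negbTE Hz).
have Ozx : forall w, Oz w || Iz w -> w \in V.
  by move=> w /HOI /orP[]/eqP->.
have Ezw : forall w, Oz w || Iz w -> E z w.
  by move=> w Hw; rewrite HN ?Ozx // HOI.
have nz : forall w, w \in V -> (w == z) = false.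
  by move=> w Hw; apply/negP => /eqP Ew; rewrite -Ew Hw in Hz.
split.
- move=> u w /or3P[/H1 /and3P[Hu Hw ->]|/andP[/eqP-> Hw]|/andP[/eqP-> Hu]].
  + by rewrite !in_setU1 Hu Hw !orbT.
  + have Hw' : Oz w || Iz w by rewrite Hw.
    by rewrite !in_setU1 eqxx (Ozx _ Hw') orbT Ezw.
  + have Hu' : Oz u || Iz u by rewrite Hu orbT.
    by rewrite !in_setU1 eqxx (Ozx _ Hu') orbT Esym Ezw.

- move=> u w; rewrite !in_setU1 => /orP[/eqP->|Hu] /orP[/eqP->|Hw].
  + by rewrite Eirr.
  + rewrite HN // => Hxy; rewrite (nz _ Hw) Dz Dz' eqxx /= ?andbF ?orbF.
    by case/orP: Hxy => /eqP->.
  + rewrite Esym HN // => Hxy; rewrite (nz _ Hu) Dz Dz' eqxx /= ?andbF ?orbF.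
    by case/orP: Hxy => /eqP-> ; rewrite addbC.
  + move=> Euw; rewrite (nz _ Hu) (nz _ Hw) /= ?andbF ?orbF; exact: H2.
- move=> u w1 w2.
  have Hxy : forall a b, (a == x) || (a == y) -> (b == x) || (b == y) -> a != b -> E a b.
    move=> a b /orP[]/eqP-> /orP[]/eqP->; rewrite ?eqxx //; rewrite Esym //.
  move=> /or3P[D1|/andP[/eqP Eu O1]|/andP[/eqP E1 I1]]
         /or3P[D2|/andP[/eqP Eu' O2]|/andP[/eqP E2 I2]].
  + exact: (H3 _ _ _ D1 D2).
  + by rewrite Eu' Dz in D1.
  + move=> _; rewrite E2 Esym.
    have /and3P[_ Hw1 _] := H1 _ _ D1.
    by rewrite HN // (HI u w1).
  + by rewrite Eu Dz in D2.
  + by move=> ne; apply: Hxy ne; apply: HOI; rewrite ?O1 ?O2.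
  + by move: I2; rewrite Eu => I2; have := Ozx z; rewrite I2 orbT (negbTE Hz) => /(_ isT).
  + move=> _; rewrite E1.
    have /and3P[_ Hw2 _] := H1 _ _ D2.
    by rewrite HN // (HI u w2).
  + by move: I1; rewrite Eu' => I1; have := Ozx z; rewrite I1 orbT (negbTE Hz) => /(_ isT).
  + by rewrite E1 E2 eqxx.
Qed.

Lemma step_zx V x y z D :
  okD V D -> x \in V -> y \in V -> E x y -> z \notin V ->
  (forall w, w \in V -> E z w = (w == x) || (w == y)) ->
  (forall w, D x w = false) -> (forall w, D y w = (w == x)) ->
  (exists D', [/\ okD (z |: V) D', forall w, D' z w = false & forall w, D' x w = (w == z)]) /\
  (exists D', [/\ okD (z |: V) D', forall w, D' x w = false & forall w, D' z w = (w == x)]).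
Proof.
move=> HD Hx Hy Exy Hz HN Sx Ny.
have [H1 _ _] := HD.
have Dz : forall w, D z w = false.
  by move=> w; apply/negP => /H1 /and3P[]; rewrite (negbTE Hz).
have nxy : (x == y) = false by apply/negP => /eqP Exy'; rewrite Exy' Eirr in Exy.
have zx : (z == x) = false by apply/negP => /eqP E'; rewrite E' Hx in Hz.
have zy : (z == y) = false by apply/negP => /eqP E'; rewrite E' Hy in Hz.
have xz : (x == z) = false by rewrite eq_sym.
split.
- exists (fun u w => [|| D u w, (u == z) && false | (w == z) && ((u == x) || (u == y))]).
  split.
  + apply: (@ext V D x y z _ _ HD) => //=; rewrite ?eqxx ?orbT //.
    by move=> u w /orP[]/eqP-> ; rewrite ?Sx ?Ny // => ->.
  + by move=> w; rewrite Dz zx zy /= ?andbF.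
  + by move=> w; rewrite Sx xz eqxx /= ?andbT ?andbF ?orbF.
- exists (fun u w => [|| D u w, (u == z) && (w == x) | (w == z) && (u == y)]).
  split.
  + apply: (@ext V D x y z _ _ HD) => //=; rewrite ?eqxx ?nxy ?(eq_sym y x) ?nxy //.
    by move=> u w /eqP->; rewrite Ny => ->.
  + by move=> w; rewrite Sx xz nxy /= ?andbF.
  + by move=> w; rewrite Dz eqxx zy /= ?andbF ?orbF.
Qed.

Lemma tt_strong V : two_tree E V -> forall a b, a \in V -> b \in V -> E a b ->
  exists D, [/\ okD V D, forall w, D a w = false & forall w, D b w = (w == a)].
Proof.
elim=> {V} [x y nxy Exy | V x y z HV IH Hx Hy Exy Hz HN] a b.
- move=> Ha Hb Eab.
  have nab : (a == b) = false by apply/negP => /eqP E'; rewrite E' Eirr in Eab.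
  have nyx : (y == x) = false by rewrite eq_sym (negbTE nxy).
  exists (fun u w => (u == b) && (w == a)); split.
  + split.
    * move=> u w /andP[/eqP-> /eqP->]; rewrite Ha Hb Esym Eab //.
    * move=> u w Hu Hw Euw.
      have nuw : (u == w) = false by apply/negP => /eqP E'; rewrite E' Eirr in Euw.
      move: Ha Hb Hu Hw nab nuw; rewrite !inE.
      by move=> /orP[]/eqP-> /orP[]/eqP-> /orP[]/eqP-> /orP[]/eqP->;
        rewrite ?eqxx ?(negbTE nxy) ?nyx.
    * by move=> u w1 w2 /andP[_ /eqP->] /andP[_ /eqP->]; rewrite eqxx.
  + by move=> w; rewrite nab.
  + by move=> w; rewrite eqxx.
- have nz : forall w, w \in V -> (w == z) = false.
    by move=> w Hw; apply/negP => /eqP Ew; rewrite -Ew Hw in Hz.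
  have [D0 [HD0 S0 N0]] := IH x y Hx Hy Exy.
  have Eyx : E y x by rewrite Esym.
  have [D1 [HD1 S1 N1]] := IH y x Hy Hx Eyx.
  have HN' : forall w, w \in V -> E z w = (w == y) || (w == x).
    by move=> w Hw; rewrite orbC HN.
  have [Ax Bx] := step_zx HD0 Hx Hy Exy Hz HN S0 N0.
  have [Ay By] := step_zx HD1 Hy Hx Eyx Hz HN' S1 N1.
  rewrite !in_setU1 => /orP[/eqP->|Ha] /orP[/eqP->|Hb].
  + by rewrite Eirr.
  + rewrite HN // => /orP[]/eqP->; [exact: Ax | exact: Ay].
  + rewrite Esym HN // => /orP[]/eqP->; [exact: Bx | exact: By].
  + move=> Eab.
    have [D [HD Sa Nb]] := IH a b Ha Hb Eab.
    exists (fun u w => [|| D u w, (u == z) && ((w == x) || (w == y)) | (w == z) && false]).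
    split.
    * apply: (@ext V D x y z _ _ HD) => //.
      - by move=> w; rewrite orbF.
      - by rewrite eqxx.
      - by rewrite eqxx orbT.
    * by move=> w; rewrite Sa nz // andbF.
    * by move=> w; rewrite Nb (nz _ Hb) /= ?andbF ?orbF.
Qed.

Lemma tt_nbr V : two_tree E V -> forall v, v \in V -> exists2 b, b \in V & E v b.
Proof.
elim=> {V} [x y nxy Exy | V x y z HV IH Hx Hy Exy Hz HN] v.
- rewrite !inE => /orP[]/eqP->.
    by exists y; rewrite ?inE ?eqxx ?orbT.
  by exists x; rewrite ?inE ?eqxx // Esym.
- rewrite in_setU1 => /orP[/eqP->|Hv].
    by exists x; rewrite ?in_setU1 ?Hx ?orbT // HN // eqxx.
  by have [b Hb Eb] := IH v Hv; exists b; rewrite // in_setU1 Hb orbT.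
Qed.

Lemma tt_ne V : two_tree E V -> exists v, v \in V.
Proof.
case=> [x y _ _|V0 x y z _ _ _ _ _ _].
  by exists x; rewrite !inE eqxx.
by exists z; rewrite in_setU1 eqxx.
Qed.

Lemma ht_exists V : hollowed_two_tree E V -> exists D, okD V D.
Proof.
elim=> {V} [V0 [s [Us Hs -> HE]] | V0 x y z HV [D HD] Hx Hy Exy Hz HN].
- by apply: cycle_exists => // u w Hu Hw; apply: HE; rewrite inE.
- exists (fun u w => [|| D u w, (u == z) && ((w == x) || (w == y)) | (w == z) && false]).
  apply: (@ext V0 D x y z _ _ HD) => //; [by move=> w; rewrite orbF | by rewrite eqxx | by rewrite eqxx ?orbT].
Qed.

Lemma okV_sub V z D : okV (z |: V) D -> okV V D.
Proof.
have S : forall w, w \in V -> w \in z |: V by move=> w Hw; rewrite in_setU1 Hw orbT.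
case=> H1 H2 H3; split.
- by move=> u w Hu Hw; apply: H1; apply: S.
- by move=> u w Hu Hw; apply: H2; apply: S.
- by move=> u w1 w2 Hu H1' H2'; apply: H3; apply: S.
Qed.

Lemma ht_nosink V : hollowed_two_tree E V -> forall D, okV V D ->
  forall v, v \in V -> exists2 w, w \in V & D v w.
Proof.
elim=> {V} [V0 [s [Us Hs -> HE]] | V0 x y z HV IH Hx Hy Exy Hz HN] D HD v Hv.
- have [/existsP[w /andP[Hw Dw]]|nos] := boolP [exists w, (w \in [set x in s]) && D v w].
    by exists w.
  exfalso; apply: (cycle_nosink Us Hs _ HD (v := v)).
  + by move=> a b Ha Hb; apply: HE; rewrite inE.
  + by move: Hv; rewrite inE.
  + move=> w Hw; move/existsPn: nos => /(_ w); by rewrite inE Hw.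
- have HD' := okV_sub HD.
  have S : forall w, w \in V0 -> w \in z |: V0 by move=> w Hw; rewrite in_setU1 Hw orbT.
  move: Hv; rewrite in_setU1 => /orP[/eqP->|Hv]; last first.
    by have [w Hw Dw] := IH D HD' v Hv; exists w => //; apply: S.
  case: HD => H1 H2 H3.
  have Hzz : z \in z |: V0 by rewrite in_setU1 eqxx.
  have Ezx : E z x by rewrite HN // eqxx.
  have Ezy : E z y by rewrite HN // eqxx orbT.
  have := H2 _ _ Hzz (S _ Hx) Ezx; case Dzx: (D z x) => /= Dxz.
    by exists x => //; apply: S.
  have := H2 _ _ Hzz (S _ Hy) Ezy; case Dzy: (D z y) => /= Dyz.
    by exists y => //; apply: S.
  exfalso.
  have nz : forall w, w \in V0 -> (w != z) by move=> w Hw; apply/eqP => Ew; rewrite -Ew Hw in Hz.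
  have [wx Hwx Dwx] := IH D HD' x Hx.
  have [wy Hwy Dwy] := IH D HD' y Hy.
  have := H3 _ _ _ (S _ Hx) (S _ Hwx) Hzz Dwx Dxz (nz _ Hwx).
  rewrite Esym HN // => /orP[/eqP Ex|/eqP Ey].
    by move: (H1 _ _ (S _ Hx) (S _ Hwx) Dwx); rewrite Ex Eirr.
  have := H3 _ _ _ (S _ Hy) (S _ Hwy) Hzz Dwy Dyz (nz _ Hwy).
  rewrite Esym HN // => /orP[/eqP Ex'|/eqP Ey'].
    have := H2 _ _ (S _ Hx) (S _ Hy) Exy.
    by rewrite -Ey -Ex' in Dwx Dwy *; rewrite Dwx Dwy.
  by move: (H1 _ _ (S _ Hy) (S _ Hwy) Dwy); rewrite Ey' Eirr.
Qed.

End G.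

Theorem lemma4p2 :
  (forall (T : finType) (E : rel T), symmetric E -> irreflexive E ->
     two_tree E [set: T] ->
     (forall v : T, exists D : rel T, one_perfect E D /\ sink D v) /\
     one_perfectly_orientable E) /\
  (forall (T : finType) (E : rel T), symmetric E -> irreflexive E ->
     hollowed_two_tree E [set: T] ->
     one_perfectly_orientable E /\
     (forall D : rel T, one_perfect E D -> forall v : T, ~ sink D v)).
Proof.
split.
- move=> T E Esym Eirr H2.
  have A : forall v, exists D, one_perfect E D /\ sink D v.
    move=> v; have [b Hb Evb] := tt_nbr Esym H2 (in_setT v).
    have [D [[H1 H2' H3] Sv _]] := tt_strong Esym Eirr H2 (in_setT v) Hb Evb.
    exists D; split; last by move=> w; rewrite Sv.
    split; last exact: H3.
    split; first by move=> x y /H1 /and3P[].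
    by move=> x y; apply: H2'; rewrite in_setT.
  split => //.
  have [v _] := tt_ne H2; have [D [HD _]] := A v; by exists D.
- move=> T E Esym Eirr H; split.
  + have [D [H1 H2 H3]] := ht_exists Esym Eirr H.
    exists D; split; last exact: H3.
    split; first by move=> x y /H1 /and3P[].
    by move=> x y; apply: H2; rewrite in_setT.
  + move=> D [[O1 O2] C] v Sv.
    have HV : okV E [set: T] D.
      split.
      * by move=> u w _ _; apply: O1.
      * by move=> u w _ _; apply: O2.
      * by move=> u w1 w2 _ _ _; apply: C.
    have [w _ Dw] := ht_nosink Esym Eirr H HV (in_setT v).
    by move: (Sv w); rewrite Dw.
Qed.
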